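(* Let $\Delta:\mathbb R\times(1,\infty)\to\mathbb R$ be defined by $\Delta(\alpha,\rho)=\frac1{\alpha(\alpha-1)}\Big[\frac{((\rho^\alpha-1)/\alpha)^{\alpha}((\rho-\rho^\alpha)/(1-\alpha))^{1-\alpha}}{\rho-1}-1\Big]$ for $\alpha\notin\{0,1\}$ and $\Delta(1,\rho)=\Delta(0,\rho)=\frac{\rho\ln\rho}{\rho-1}-\ln\frac{e\rho\ln\rho}{\rho-1}$. Then: (a) for every $\rho>1$, $\alpha\mapsto\Delta(\alpha,\rho)$ is convex on $\mathbb R$, symmetric around $\alpha=\tfrac12$ (i.e. $\Delta(1+\alpha,\rho)=\Delta(-\alpha,\rho)$), and has its global minimum at $\alpha=\tfrac12$; (b) $\alpha\Delta(\alpha,\rho)\le\beta\Delta(\beta,\rho)$ for $0<\alpha\le\beta<\infty$, and $(1-\beta)\Delta(\beta,\rho)\le(1-\alpha)\Delta(\alpha,\rho)$ for $-\infty<\alpha\le\beta<1$; (c) for every $\alpha\in\mathbb R$, $\rho\mapsto\Delta(\alpha,\rho)$ is monotonically increasing and continuous on $(1,\infty)$, and $\lim_{\rho\to1^+}\Delta(\alpha,\rho)=0$.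
   Context: $\Delta(\alpha,\rho)$ equals $\lim_{n\to\infty}\max_{Q\in\mathcal P_n(\rho)}D_{\mathrm A}^{(\alpha)}(Q\|U_n)$, where $\mathcal P_n(\rho)$ is the set of probability mass functions on $\{1,\dots,n\}$ with positive masses and max/min mass ratio at most $\rho$, $U_n$ is uniform, and $D_{\mathrm A}^{(\alpha)}(P\|Q)=\sum_xQ(x)u_\alpha(P(x)/Q(x))$ with $u_\alpha(t)=\frac{t^\alpha-\alpha(t-1)-1}{\alpha(\alpha-1)}$ ($\alpha\notin\{0,1\}$), $u_1(t)=t\ln t+1-t$, $u_0(t)=-\ln t$. *)

(* Defs.v *)
From Stdlib Require Import Reals Lra.
Open Scope R_scope.

(* Delta(alpha, rho) from the paper; meaningful for rho > 1.
   For alpha not in {0,1}, the bases (rho^a - 1)/a and (rho - rho^a)/(1-a)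
   are positive when rho > 1, so real powers (Rpower) are well defined. *)
Definition Dlt (a rho : R) : R :=
  if Req_EM_T a 0 then rho * ln rho / (rho - 1) - ln (exp 1 * rho * ln rho / (rho - 1))
  else if Req_EM_T a 1 then rho * ln rho / (rho - 1) - ln (exp 1 * rho * ln rho / (rho - 1))
  else / (a * (a - 1)) *
       (Rpower ((Rpower rho a - 1) / a) a
        * Rpower ((rho - Rpower rho a) / (1 - a)) (1 - a) / (rho - 1) - 1).

Definition convex_on_R (f : R -> R) : Prop :=
  forall x y t, 0 <= t <= 1 -> f (t * x + (1 - t) * y) <= t * f x + (1 - t) * f y.

(* Main.v *)
Require Import Defs.
From Stdlib Require Import Reals Lra.
From Coquelicot Require Import Coquelicot.
Open Scope R_scope.

Definition uu (a t : R) : R :=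
  if Req_EM_T a 0 then t - 1 - ln t
  else if Req_EM_T a 1 then t * ln t - t + 1
  else (Rpower t a - 1 - a * (t - 1)) / (a * (a - 1)).

Definition Wi (a z m : R) : R := z * (exp (z * (1 - m)) - 1) * exp (z * m * a).
Definition W (a z : R) : R := RInt (Wi a z) 0 1.

Lemma Wi_cont a z m : continuous (Wi a z) m.
Proof. apply (ex_derive_continuous (V:=R_NormedModule)). unfold Wi. auto_derive. auto. Qed.

Lemma Wi_ex a z : ex_RInt (Wi a z) 0 1.
Proof. apply (ex_RInt_continuous (V:=R_CompleteNormedModule)). intros; apply Wi_cont. Qed.

Lemma exp_convex (l u v : R) : 0 <= l <= 1 ->
  exp (l * u + (1 - l) * v) <= l * exp u + (1 - l) * exp v.
Proof.
  intros Hl. set (m := l * u + (1 - l) * v).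
  assert (Hu : exp m * (1 + (u - m)) <= exp u).
  { replace (exp u) with (exp m * exp (u - m)).
    apply Rmult_le_compat_l. left; apply exp_pos. apply exp_ineq1_le.
    rewrite <- exp_plus. f_equal. ring. }
  assert (Hv : exp m * (1 + (v - m)) <= exp v).
  { replace (exp v) with (exp m * exp (v - m)).
    apply Rmult_le_compat_l. left; apply exp_pos. apply exp_ineq1_le.
    rewrite <- exp_plus. f_equal. ring. }
  assert (E : l * (exp m * (1 + (u - m))) + (1 - l) * (exp m * (1 + (v - m))) = exp m).
  { unfold m; ring. }
  nra.
Qed.

Lemma W_convex (a b l z : R) : 0 <= l <= 1 ->
  W (l * a + (1 - l) * b) z <= l * W a z + (1 - l) * W b z.
Proof.
  intros Hl. unfold W.
  apply (is_RInt_le (Wi (l * a + (1 - l) * b) z)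
          (fun m => l * Wi a z m + (1 - l) * Wi b z m) 0 1).
  - lra.
  - apply (RInt_correct (V:=R_CompleteNormedModule)). apply Wi_ex.
  - apply (is_RInt_plus (V:=R_NormedModule) (fun m => l * Wi a z m) (fun m => (1-l) * Wi b z m)).
    + apply (is_RInt_scal (V:=R_NormedModule) (Wi a z) 0 1 l). apply (RInt_correct (V:=R_CompleteNormedModule)). apply Wi_ex.
    + apply (is_RInt_scal (V:=R_NormedModule) (Wi b z) 0 1 (1-l)). apply (RInt_correct (V:=R_CompleteNormedModule)). apply Wi_ex.
  - intros m Hm. unfold Wi.
    assert (Hc : 0 <= z * (exp (z * (1 - m)) - 1)).
    { destruct (Rle_dec 0 z).
      - apply Rmult_le_pos; auto. assert (1 <= exp (z*(1-m))).
        { pose proof (exp_ineq1_le (z*(1-m))). nra. } lra.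
      - assert (exp (z * (1-m)) <= 1).
        { assert (exp (z*(1-m)) <= exp 0). { destruct (Req_dec (z*(1-m)) 0) as [E|E]. rewrite E; lra.
          left; apply exp_increasing. nra. } rewrite exp_0 in H; exact H. }
        nra. }
    assert (He : exp (z * m * (l * a + (1 - l) * b)) <= l * exp (z*m*a) + (1-l) * exp (z*m*b)).
    { replace (z * m * (l * a + (1 - l) * b)) with (l * (z*m*a) + (1-l)*(z*m*b)) by ring.
      apply exp_convex; auto. }
    nra.
Qed.

Lemma W_eval (a z : R) (F : R -> R) :
  (forall x, is_derive F x (Wi a z x)) -> W a z = F 1 - F 0.
Proof.
  intros HF. unfold W. apply is_RInt_unique.
  apply (is_RInt_derive (V:=R_CompleteNormedModule) F (Wi a z)).
  - intros; apply HF.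
  - intros; apply Wi_cont.
Qed.

Lemma W_val (a z : R) : W a z = uu a (exp z).
Proof.
  unfold uu, Rpower; rewrite ln_exp.
  destruct (Req_EM_T a 0) as [Ha0|Ha0].
  { subst a. rewrite (W_eval 0 z (fun m => - exp (z * (1 - m)) - z * m)).
    - replace (z * (1 - 1)) with 0 by ring. replace (z*(1-0)) with z by ring. rewrite exp_0. ring.
    - intros x. auto_derive. auto. unfold Wi. rewrite Rmult_0_r, exp_0. replace (1 + - x) with (1 - x) by ring. ring. }
  destruct (Req_EM_T a 1) as [Ha1|Ha1].
  { subst a. rewrite (W_eval 1 z (fun m => z * exp z * m - exp (z * m))).
    - rewrite !Rmult_0_r, !Rmult_1_r, exp_0. ring.
    - intros x. auto_derive. auto. unfold Wi.
      replace (exp (z * x * 1)) with (exp (z * x)) by (f_equal; ring).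
      replace (exp z) with (exp (z*(1-x)) * exp (z*x)) by (rewrite <- exp_plus; f_equal; ring).
      ring. }
  rewrite (W_eval a z (fun m => exp z * exp (z * (a - 1) * m) / (a - 1) - exp (z * a * m) / a)).
  - rewrite !Rmult_0_r, exp_0, !Rmult_1_r.
    replace (exp z * exp (z * (a - 1))) with (exp (a * z)) by (rewrite <- exp_plus; f_equal; ring).
    replace (z * a) with (a * z) by ring.
    field. repeat split; try assumption; intro; apply Ha1; lra.
  - intros x. auto_derive. auto. unfold Wi.
    replace (exp (z * x * a)) with (exp (z * a * x)) by (f_equal; ring).
    replace (exp (z * (1 - x))) with (exp z * exp (z * (a - 1) * x) / exp (z * a * x)).
    field. repeat split; try assumption; try (apply Rgt_not_eq, exp_pos); intro; apply Ha1; lra.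
    apply Rmult_eq_reg_r with (exp (z*a*x)). 2: apply Rgt_not_eq, exp_pos.
    unfold Rdiv. rewrite Rmult_assoc, Rinv_l, Rmult_1_r. rewrite <- !exp_plus; f_equal; ring.
    apply Rgt_not_eq, exp_pos.
Qed.

Lemma uu_convex (a b l t : R) : 0 < t -> 0 <= l <= 1 ->
  uu (l * a + (1 - l) * b) t <= l * uu a t + (1 - l) * uu b t.
Proof.
  intros Ht Hl. rewrite <- (exp_ln t Ht), <- !W_val. apply W_convex; auto.
Qed.

Lemma ln_le1 y : 0 < y -> ln y <= y - 1.
Proof. intros Hy. pose proof (exp_ineq1_le (ln y)). rewrite exp_ln in H; lra. Qed.

Lemma uu_0 t : uu 0 t = t - 1 - ln t.
Proof. unfold uu. destruct (Req_EM_T 0 0); [reflexivity|congruence]. Qed.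
Lemma uu_1 t : uu 1 t = t * ln t - t + 1.
Proof. unfold uu. destruct (Req_EM_T 1 0); [lra|]. destruct (Req_EM_T 1 1); [reflexivity|congruence]. Qed.
Lemma uu_g a t : a <> 0 -> a <> 1 -> uu a t = (Rpower t a - 1 - a * (t - 1)) / (a * (a - 1)).
Proof. intros H0 H1. unfold uu. destruct (Req_EM_T a 0); [congruence|]. destruct (Req_EM_T a 1); [congruence|reflexivity]. Qed.

Lemma bern a y : 0 < y -> 0 <= a * (a - 1) * (Rpower y a - 1 - a * (y - 1)).
Proof.
  intros Hy. unfold Rpower. set (z := ln y).
  replace y with (exp z) by (unfold z; apply exp_ln; auto).
  destruct (Rle_dec a 0) as [Ha|Ha].
  { set (b := / (1 - a)).
    assert (Hb : 0 < b <= 1). { unfold b. split. apply Rinv_0_lt_compat; lra.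
      rewrite <- Rinv_1. apply Rinv_le_contravar; lra. }
    pose proof (exp_convex b (a*z) z (conj (Rlt_le _ _ (proj1 Hb)) (proj2 Hb))) as H.
    replace (b * (a * z) + (1 - b) * z) with 0 in H by (unfold b; field; lra).
    rewrite exp_0 in H.
    assert (1 - a <= exp (a * z) - a * exp z).
    { apply Rmult_le_reg_l with b. lra.
      replace (b * (1 - a)) with 1 by (unfold b; field; lra).
      replace (b * (exp (a*z) - a * exp z)) with (b * exp (a*z) + (1 - b) * exp z) by (unfold b; field; lra).
      exact H. }
    assert (0 <= a * (a-1)) by nra. nra. }
  destruct (Rle_dec a 1) as [Ha1|Ha1].
  { pose proof (exp_convex a z 0 (conj (Rlt_le _ _ (Rnot_le_lt _ _ Ha)) Ha1)) as H.
    rewrite Rmult_0_r, Rplus_0_r, exp_0 in H.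
    assert (a * (a-1) <= 0) by nra. nra. }
  { set (b := / a).
    assert (Hb : 0 < b <= 1). { unfold b. split. apply Rinv_0_lt_compat; lra.
      rewrite <- Rinv_1. apply Rinv_le_contravar; lra. }
    pose proof (exp_convex b (a*z) 0 (conj (Rlt_le _ _ (proj1 Hb)) (proj2 Hb))) as H.
    rewrite Rmult_0_r, Rplus_0_r, exp_0 in H.
    replace (b * (a * z)) with z in H by (unfold b; field; lra).
    assert (a * exp z <= exp (a * z) + a - 1).
    { apply Rmult_le_reg_l with b. lra.
      replace (b * (a * exp z)) with (exp z) by (unfold b; field; lra).
      replace (b * (exp (a*z) + a - 1)) with (b * exp (a*z) + (1 - b) * 1) by (unfold b; field; lra).
      lra. }
    assert (0 <= a * (a-1)) by nra. nra. }
Qed.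

Definition du (a v : R) : R :=
  if Req_EM_T a 0 then 1 - 1 / v
  else if Req_EM_T a 1 then ln v
  else (Rpower v (a - 1) - 1) / (a - 1).

Lemma Rpower_pos x y : 0 < Rpower x y.
Proof. unfold Rpower; apply exp_pos. Qed.

Lemma uu_tan a t v : 0 < t -> 0 < v -> uu a v + du a v * (t - v) <= uu a t.
Proof.
  intros Ht Hv. unfold du.
  destruct (Req_EM_T a 0) as [H0|H0].
  { subst; rewrite !uu_0. pose proof (ln_le1 (t / v)) as H.
    rewrite ln_div in H by auto.
    assert (t / v - 1 = (t - v) / v) by (field; lra).
    assert ((1 - 1/v) * (t - v) = (t - v) - (t - v) / v) by (field; lra).
    assert (0 < t / v) by (apply Rdiv_lt_0_compat; auto). lra. }
  destruct (Req_EM_T a 1) as [H1|H1].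
  { subst; rewrite !uu_1. pose proof (ln_le1 (v / t)) as H.
    rewrite ln_div in H by auto.
    assert (0 < v / t) by (apply Rdiv_lt_0_compat; auto).
    assert (t * (ln v - ln t) <= t * (v / t - 1)) by (apply Rmult_le_compat_l; lra).
    assert (t * (v / t - 1) = v - t) by (field; lra). nra. }
  rewrite !uu_g by auto.
  pose proof (bern a (t / v) (Rdiv_lt_0_compat _ _ Ht Hv)) as B.
  assert (E1 : Rpower t a = Rpower v a * Rpower (t / v) a).
  { unfold Rpower. rewrite <- exp_plus. f_equal. rewrite ln_div by auto. ring. }
  assert (E2 : Rpower v (a - 1) = Rpower v a / v).
  { unfold Rpower. replace ((a-1) * ln v) with (a * ln v + - ln v) by ring.
    rewrite exp_plus, exp_Ropp, exp_ln by auto. reflexivity. }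
  rewrite E1, E2. set (P := Rpower v a). set (Q := Rpower (t / v) a).
  assert (HP : 0 < P) by apply Rpower_pos.
  set (c := a * (a - 1)). assert (Hc : c <> 0).
  { unfold c. intro. apply Rmult_integral in H. destruct H; [auto| apply H1; lra]. }
  assert (D : (P * Q - 1 - a * (t - 1)) / c - ((P - 1 - a * (v - 1)) / c + (P / v - 1) / (a - 1) * (t - v))
     = P * (c * (Q - 1 - a * (t / v - 1))) / (c * c)).
  { unfold c. field. repeat split; try lra; try assumption; try (intro; apply H1; lra). }
  assert (0 <= P * (c * (Q - 1 - a * (t / v - 1))) / (c * c)).
  { apply Rmult_le_pos. apply Rmult_le_pos. lra. exact B.
    left; apply Rinv_0_lt_compat. assert (c*c > 0) by (apply Rsqr_pos_lt in Hc; unfold Rsqr in Hc; lra). lra. }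
  lra.
Qed.

Lemma uu_at1 a : uu a 1 = 0.
Proof. unfold uu, Rpower. rewrite ln_1. destruct (Req_EM_T a 0). ring. destruct (Req_EM_T a 1). ring.
  rewrite Rmult_0_r, exp_0. unfold Rdiv. ring. Qed.

Lemma du_at1 a : du a 1 = 0.
Proof. unfold du, Rpower. rewrite ln_1. destruct (Req_EM_T a 0). field. destruct (Req_EM_T a 1). ring.
  rewrite Rmult_0_r, exp_0. unfold Rdiv. ring. Qed.

Lemma uu_nonneg a t : 0 < t -> 0 <= uu a t.
Proof. intros Ht. pose proof (uu_tan a t 1 Ht Rlt_0_1). rewrite uu_at1, du_at1 in H. lra. Qed.

Lemma uu_chord a L v H : 0 < L -> L <= v <= H -> L < H ->
  (H - L) * uu a v <= (H - v) * uu a L + (v - L) * uu a H.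
Proof.
  intros HL Hv HLH.
  pose proof (uu_tan a L v HL ltac:(lra)) as T1.
  pose proof (uu_tan a H v ltac:(lra) ltac:(lra)) as T2.
  assert ((H - v) * (uu a v + du a v * (L - v)) <= (H - v) * uu a L) by (apply Rmult_le_compat_l; lra).
  assert ((v - L) * (uu a v + du a v * (H - v)) <= (v - L) * uu a H) by (apply Rmult_le_compat_l; lra).
  nra.
Qed.

Definition Phi (rho a s : R) : R :=
  (s - 1) / (rho - 1) * uu a (rho / s) + (1 - (s - 1) / (rho - 1)) * uu a (1 / s).

Lemma Rp_div x y a : 0 < x -> 0 < y -> Rpower (x / y) a = Rpower x a / Rpower y a.
Proof.
  intros Hx Hy. unfold Rpower. rewrite ln_div by auto.
  replace (a * (ln x - ln y)) with (a * ln x + - (a * ln y)) by ring.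
  rewrite exp_plus, exp_Ropp. reflexivity.
Qed.

Lemma Rp_1 a : Rpower 1 a = 1.
Proof. unfold Rpower. rewrite ln_1, Rmult_0_r, exp_0. reflexivity. Qed.

Lemma lnrho_pos rho : 1 < rho -> 0 < ln rho.
Proof. intros. rewrite <- ln_1. apply ln_increasing; lra. Qed.

Lemma Dlt_01 a rho : (a = 0 \/ a = 1) -> 1 < rho ->
  Dlt a rho = ln rho / (rho - 1) - 1 - ln (ln rho / (rho - 1)).
Proof.
  intros Ha Hr. pose proof (lnrho_pos rho Hr) as Hl.
  assert (Hq : 0 < ln rho / (rho - 1)) by (apply Rdiv_lt_0_compat; lra).
  assert (E : rho * ln rho / (rho - 1) - ln (exp 1 * rho * ln rho / (rho - 1)) =
              ln rho / (rho - 1) - 1 - ln (ln rho / (rho - 1))).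
  { replace (exp 1 * rho * ln rho / (rho - 1)) with (exp 1 * (rho * (ln rho / (rho - 1)))) by (field; lra).
    rewrite !ln_mult, ln_exp by (try apply exp_pos; try lra; try apply Rmult_lt_0_compat; lra).
    replace (rho * ln rho / (rho - 1)) with (ln rho + ln rho / (rho - 1)) by (field; lra). ring. }
  unfold Dlt. destruct Ha; subst.
  - destruct (Req_EM_T 0 0); [exact E|congruence].
  - destruct (Req_EM_T 1 0); [lra|]. destruct (Req_EM_T 1 1); [exact E|congruence].
Qed.

Lemma Dlt_g a rho : a <> 0 -> a <> 1 ->
  Dlt a rho = / (a * (a - 1)) *
       (Rpower ((Rpower rho a - 1) / a) a
        * Rpower ((rho - Rpower rho a) / (1 - a)) (1 - a) / (rho - 1) - 1).
Proof. intros. unfold Dlt. destruct (Req_EM_T a 0); [congruence|]. destruct (Req_EM_T a 1); [congruence|reflexivity]. Qed.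

Lemma Phi_0 rho s : 1 < rho -> 0 < s -> Phi rho 0 s = ln s - (s - 1) * (ln rho / (rho - 1)).
Proof.
  intros Hr Hs. unfold Phi. rewrite !uu_0. rewrite !ln_div, ln_1 by lra. field. lra.
Qed.

Lemma Phi_1 rho s : 1 < rho -> 0 < s -> Phi rho 1 s = rho * (s - 1) * (ln rho / (rho - 1)) / s - ln s.
Proof.
  intros Hr Hs. unfold Phi. rewrite !uu_1. rewrite !ln_div, ln_1 by lra. field. lra.
Qed.

Lemma q_range rho : 1 < rho -> / rho <= ln rho / (rho - 1) <= 1.
Proof.
  intros Hr. pose proof (ln_le1 rho ltac:(lra)). pose proof (ln_le1 (/ rho) ltac:(apply Rinv_0_lt_compat; lra)).
  rewrite ln_Rinv in H0 by lra.
  split.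
  - apply Rmult_le_reg_r with (rho - 1). lra. unfold Rdiv. rewrite Rmult_assoc, Rinv_l, Rmult_1_r by lra.
    apply Rmult_le_reg_l with rho. lra. rewrite <- Rmult_assoc, Rinv_r, Rmult_1_l by lra.
    assert (rho * (/ rho - 1) = 1 - rho) by (field; lra). nra.
  - apply Rmult_le_reg_r with (rho - 1). lra. unfold Rdiv. rewrite Rmult_assoc, Rinv_l, Rmult_1_r by lra. lra.
Qed.

Lemma max_01 a rho : (a = 0 \/ a = 1) -> 1 < rho ->
  (forall s, 1 <= s <= rho -> Phi rho a s <= Dlt a rho) /\
  (exists s, 1 <= s <= rho /\ Phi rho a s = Dlt a rho).
Proof.
  intros Ha Hr. rewrite Dlt_01 by auto.
  pose proof (q_range rho Hr) as Hq. set (q := ln rho / (rho - 1)) in *.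
  pose proof (lnrho_pos rho Hr) as Hl.
  assert (q0 : 0 < q) by (unfold q; apply Rdiv_lt_0_compat; lra).
  assert (Elr : ln rho = (rho - 1) * q) by (unfold q; field; lra).
  assert (Hir : 0 < / rho) by (apply Rinv_0_lt_compat; lra).
  destruct Ha; subst a.
  - split.
    + intros s Hs. rewrite Phi_0 by lra. fold q.
      pose proof (ln_le1 (s * q) ltac:(apply Rmult_lt_0_compat; lra)). rewrite ln_mult in H by lra. nra.
    + exists (/ q). split.
      * split. rewrite <- Rinv_1. apply Rinv_le_contravar; lra.
        rewrite <- (Rinv_inv rho). apply Rinv_le_contravar; lra.
      * rewrite Phi_0 by (try apply Rinv_0_lt_compat; lra). fold q. rewrite ln_Rinv by lra. field. lra.
  - split.
    + intros s Hs. rewrite Phi_1 by lra. fold q.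
      assert (0 < rho * q / s) by (apply Rdiv_lt_0_compat; try apply Rmult_lt_0_compat; lra).
      pose proof (ln_le1 (rho * q / s) H). rewrite ln_div, ln_mult in H0 by lra.
      assert (rho * (s - 1) * q / s = rho * q - rho * q / s) by (field; lra). lra.
    + exists (rho * q). split.
      * split. apply Rmult_le_reg_l with (/ rho). auto. rewrite <- Rmult_assoc, Rinv_l, Rmult_1_l, Rmult_1_r; lra.
        nra.
      * rewrite Phi_1 by nra. fold q. rewrite ln_mult by lra. rewrite Elr. field. split; lra.
Qed.

Definition AA a rho := (Rpower rho a - 1) / a.
Definition BB a rho := (rho - Rpower rho a) / (1 - a).

Lemma AB_pos a rho : 1 < rho -> a <> 0 -> a <> 1 -> 0 < AA a rho /\ 0 < BB a rho.
Proof.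
  intros Hr H0 H1. pose proof (lnrho_pos rho Hr) as Hl. unfold AA, BB, Rpower.
  assert (Er : exp (ln rho) = rho) by (apply exp_ln; lra).
  split.
  - destruct (Rlt_dec 0 a).
    + apply Rdiv_lt_0_compat; auto. assert (exp 0 < exp (a * ln rho)) by (apply exp_increasing; nra).
      rewrite exp_0 in H; lra.
    + assert (a < 0) by lra. assert (exp (a * ln rho) < exp 0) by (apply exp_increasing; nra).
      rewrite exp_0 in H2. replace ((exp (a * ln rho) - 1) / a) with ((1 - exp (a * ln rho)) / (- a)) by (field; auto).
      apply Rdiv_lt_0_compat; lra.
  - destruct (Rlt_dec a 1).
    + apply Rdiv_lt_0_compat; try lra. assert (exp (a * ln rho) < exp (ln rho)) by (apply exp_increasing; nra). lra.
    + assert (1 < a) by lra. assert (exp (ln rho) < exp (a * ln rho)) by (apply exp_increasing; nra).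
      replace ((rho - exp (a * ln rho)) / (1 - a)) with ((exp (a * ln rho) - rho) / (a - 1)) by (field; lra).
      apply Rdiv_lt_0_compat; lra.
Qed.

Lemma key a rho s : 1 < rho -> a <> 0 -> a <> 1 -> 0 < s ->
  Dlt a rho - Phi rho a s =
  BB a rho * (Rpower (s * AA a rho / BB a rho) a - 1 - a * (s * AA a rho / BB a rho - 1))
     / ((rho - 1) * Rpower s a * (a * (a - 1))).
Proof.
  intros Hr H0 H1 Hs. destruct (AB_pos a rho Hr H0 H1) as [HA HB].
  rewrite Dlt_g by auto. unfold Phi. rewrite !uu_g by auto.
  change ((Rpower rho a - 1) / a) with (AA a rho).
  change ((rho - Rpower rho a) / (1 - a)) with (BB a rho).
  rewrite (Rp_div rho s) by lra. rewrite (Rp_div 1 s) by lra. rewrite Rp_1.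
  rewrite (Rp_div (s * AA a rho) (BB a rho)) by (first [lra | apply Rmult_lt_0_compat; lra]).
  rewrite <- (Rpower_mult_distr s (AA a rho)) by lra.
  assert (EB : Rpower (BB a rho) (1 - a) = BB a rho / Rpower (BB a rho) a).
  { unfold Rminus. rewrite Rpower_plus, Rpower_1, Rpower_Ropp by auto. reflexivity. }
  rewrite EB.
  pose proof (Rpower_pos s a). pose proof (Rpower_pos (BB a rho) a).
  set (PA := Rpower (AA a rho) a) in *. set (PB := Rpower (BB a rho) a) in *. set (S := Rpower s a) in *.
  unfold AA, BB in *. set (R := Rpower rho a) in *.
  assert (HR : rho - R <> 0). { intro E. rewrite E in HB. unfold Rdiv in HB. rewrite Rmult_0_l in HB. lra. }
  field. repeat split; try lra; try assumption; try (intro; apply H1; lra).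
Qed.

Lemma nonneg_div_c c X K : c <> 0 -> 0 <= c * X -> 0 < K -> 0 <= X / (c * K).
Proof.
  intros Hc HX HK. replace (X / (c * K)) with ((c * X) / (c * c * K)) by (field; split; auto; lra).
  apply Rmult_le_pos; auto. left. apply Rinv_0_lt_compat. apply Rmult_lt_0_compat; auto.
  assert (0 < c * c) by (apply Rsqr_pos_lt in Hc; unfold Rsqr in Hc; lra). lra.
Qed.

Lemma c_neq a : a <> 0 -> a <> 1 -> a * (a - 1) <> 0.
Proof. intros H0 H1 E. apply Rmult_integral in E. destruct E; [auto|apply H1; lra]. Qed.

Lemma max_g a rho : a <> 0 -> a <> 1 -> 1 < rho ->
  (forall s, 1 <= s <= rho -> Phi rho a s <= Dlt a rho) /\
  (exists s, 1 <= s <= rho /\ Phi rho a s = Dlt a rho).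
Proof.
  intros H0 H1 Hr. destruct (AB_pos a rho Hr H0 H1) as [HA HB].
  pose proof (c_neq a H0 H1) as Hc.
  split.
  - intros s Hs. pose proof (key a rho s Hr H0 H1 ltac:(lra)) as K.
    assert (0 <= BB a rho * (Rpower (s * AA a rho / BB a rho) a - 1 - a * (s * AA a rho / BB a rho - 1))
     / ((rho - 1) * Rpower s a * (a * (a - 1)))).
    { set (X := Rpower (s * AA a rho / BB a rho) a - 1 - a * (s * AA a rho / BB a rho - 1)).
      assert (HX : 0 <= X / (a * (a - 1) * ((rho - 1) * Rpower s a))).
      { apply nonneg_div_c; auto. apply bern. apply Rdiv_lt_0_compat; first [lra | apply Rmult_lt_0_compat; lra].
        apply Rmult_lt_0_compat. lra. apply Rpower_pos. }
      pose proof (Rpower_pos s a).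
      replace (BB a rho * X / ((rho - 1) * Rpower s a * (a * (a - 1)))) with
        (BB a rho * (X / (a * (a - 1) * ((rho - 1) * Rpower s a)))) by (field; repeat split; auto; lra).
      apply Rmult_le_pos; lra. }
    lra.
  - exists (BB a rho / AA a rho).
    assert (Hs : 0 < BB a rho / AA a rho) by (apply Rdiv_lt_0_compat; lra).
    split.
    + assert (E1 : BB a rho - AA a rho = (Rpower rho a - 1 - a * (rho - 1)) / (a * (a - 1) * 1)).
      { unfold AA, BB. field. repeat split; try assumption; intro; apply H1; lra. }
      assert (E2 : rho * AA a rho - BB a rho =
                   (Rpower (1 / rho) a - 1 - a * (1 / rho - 1)) / (a * (a - 1) * / (rho * Rpower rho a))).
      { rewrite Rp_div, Rp_1 by lra. pose proof (Rpower_pos rho a).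
        unfold AA, BB. field. repeat split; try assumption; try lra; intro; apply H1; lra. }
      assert (0 <= BB a rho - AA a rho).
      { rewrite E1. apply nonneg_div_c; auto. apply bern; lra. lra. }
      assert (0 <= rho * AA a rho - BB a rho).
      { rewrite E2. apply nonneg_div_c; auto. apply bern. apply Rdiv_lt_0_compat; lra.
        apply Rinv_0_lt_compat. apply Rmult_lt_0_compat. lra. apply Rpower_pos. }
      split.
      * apply Rmult_le_reg_r with (AA a rho). auto. unfold Rdiv. rewrite Rmult_assoc, Rinv_l; lra.
      * apply Rmult_le_reg_r with (AA a rho). auto. unfold Rdiv. rewrite Rmult_assoc, Rinv_l; lra.
    + pose proof (key a rho _ Hr H0 H1 Hs) as K.
      replace (BB a rho / AA a rho * AA a rho / BB a rho) with 1 in K by (field; lra).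
      rewrite Rp_1 in K. replace (1 - 1 - a * (1 - 1)) with 0 in K by ring.
      rewrite Rmult_0_r in K. unfold Rdiv in K. rewrite Rmult_0_l in K. lra.
Qed.

Lemma max_all a rho : 1 < rho ->
  (forall s, 1 <= s <= rho -> Phi rho a s <= Dlt a rho) /\
  (exists s, 1 <= s <= rho /\ Phi rho a s = Dlt a rho).
Proof.
  intros Hr. destruct (Req_EM_T a 0). apply max_01; auto.
  destruct (Req_EM_T a 1). apply max_01; auto. apply max_g; auto.
Qed.

Lemma p_range rho s : 1 < rho -> 1 <= s <= rho -> 0 <= (s - 1) / (rho - 1) <= 1.
Proof.
  intros Hr Hs. split.
  - apply Rmult_le_pos; [lra|]. left; apply Rinv_0_lt_compat; lra.
  - apply Rmult_le_reg_r with (rho - 1). lra. unfold Rdiv. rewrite Rmult_assoc, Rinv_l; lra.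
Qed.

Lemma Phi_convex rho s x y l : 1 < rho -> 1 <= s <= rho -> 0 <= l <= 1 ->
  Phi rho (l * x + (1 - l) * y) s <= l * Phi rho x s + (1 - l) * Phi rho y s.
Proof.
  intros Hr Hs Hl. unfold Phi. pose proof (p_range rho s Hr Hs) as Hp.
  set (p := (s - 1) / (rho - 1)) in *.
  pose proof (uu_convex x y l (rho / s) ltac:(apply Rdiv_lt_0_compat; lra) Hl).
  pose proof (uu_convex x y l (1 / s) ltac:(apply Rdiv_lt_0_compat; lra) Hl).
  assert (p * uu (l * x + (1 - l) * y) (rho / s) <= p * (l * uu x (rho / s) + (1 - l) * uu y (rho / s)))
    by (apply Rmult_le_compat_l; lra).
  assert ((1 - p) * uu (l * x + (1 - l) * y) (1 / s) <= (1 - p) * (l * uu x (1 / s) + (1 - l) * uu y (1 / s)))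
    by (apply Rmult_le_compat_l; lra).
  lra.
Qed.

Lemma Dlt_convex rho : 1 < rho -> convex_on_R (fun a => Dlt a rho).
Proof.
  intros Hr x y l Hl.
  destruct (proj2 (max_all (l * x + (1 - l) * y) rho Hr)) as [s [Hs E]].
  rewrite <- E. eapply Rle_trans. apply Phi_convex; auto.
  pose proof (proj1 (max_all x rho Hr) s Hs). pose proof (proj1 (max_all y rho Hr) s Hs).
  assert (l * Phi rho x s <= l * Dlt x rho) by (apply Rmult_le_compat_l; lra).
  assert ((1 - l) * Phi rho y s <= (1 - l) * Dlt y rho) by (apply Rmult_le_compat_l; lra).
  lra.
Qed.

Lemma uu_sym a t : 0 < t -> uu (1 - a) t = t * uu a (1 / t).
Proof.
  intros Ht.
  assert (L : ln (1 / t) = - ln t) by (rewrite ln_div, ln_1 by lra; ring).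
  destruct (Req_EM_T a 0) as [H0|H0].
  { subst. replace (1 - 0) with 1 by ring. rewrite uu_1, uu_0, L. field. lra. }
  destruct (Req_EM_T a 1) as [H1|H1].
  { subst. replace (1 - 1) with 0 by ring. rewrite uu_1, uu_0, L. field. lra. }
  rewrite !uu_g; try lra; try (intro; apply H1; lra); try (intro; apply H0; lra).
  rewrite Rp_div, Rp_1 by lra.
  assert (E : Rpower t (1 - a) = t / Rpower t a).
  { unfold Rminus. rewrite Rpower_plus, Rpower_1, Rpower_Ropp by lra. reflexivity. }
  rewrite E. pose proof (Rpower_pos t a).
  field. repeat split; try lra; try (intro; apply H1; lra).
Qed.

Lemma Phi_sym rho a s : 1 < rho -> 1 <= s <= rho -> Phi rho (1 - a) s = Phi rho a (rho / s).
Proof.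
  intros Hr Hs. unfold Phi.
  rewrite !uu_sym by (apply Rdiv_lt_0_compat; lra).
  replace (1 / (rho / s)) with (s / rho) by (field; lra).
  replace (1 / (1 / s)) with s by (field; lra).
  replace (rho / (rho / s)) with s by (field; lra).
  field. lra.
Qed.

Lemma Dlt_sym_le rho a : 1 < rho -> Dlt (1 - a) rho <= Dlt a rho.
Proof.
  intros Hr. destruct (proj2 (max_all (1 - a) rho Hr)) as [s [Hs E]].
  rewrite <- E, Phi_sym by auto. apply (proj1 (max_all a rho Hr)).
  split. apply Rmult_le_reg_r with s. lra. unfold Rdiv. rewrite Rmult_assoc, Rinv_l; lra.
  apply Rmult_le_reg_r with s. lra. unfold Rdiv. rewrite Rmult_assoc, Rinv_l; nra.
Qed.

Lemma Dlt_sym rho a : 1 < rho -> Dlt (1 - a) rho = Dlt a rho.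
Proof.
  intros Hr. apply Rle_antisym. apply Dlt_sym_le; auto.
  pose proof (Dlt_sym_le rho (1 - a) Hr). replace (1 - (1 - a)) with a in H by ring. exact H.
Qed.

Lemma Dlt_min rho a : 1 < rho -> Dlt (1 / 2) rho <= Dlt a rho.
Proof.
  intros Hr. pose proof (Dlt_convex rho Hr a (1 - a) (1 / 2) ltac:(lra)) as H. simpl in H.
  replace (1 / 2 * a + (1 - 1 / 2) * (1 - a)) with (1 / 2) in H by field.
  rewrite Dlt_sym in H by auto. lra.
Qed.

Definition Gs (t a : R) : R := if Req_EM_T a 1 then t * ln t else (Rpower t a - t) / (a - 1).

Lemma a_uu a t : a <> 0 -> 0 < t -> a * uu a t = Gs t a - (t - 1).
Proof.
  intros H0 Ht. unfold Gs. destruct (Req_EM_T a 1) as [H1|H1].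
  - subst. rewrite uu_1. ring.
  - rewrite uu_g by auto. field. split; auto. intro; apply H1; lra.
Qed.

Lemma S1 z a : a < 1 -> (exp (a * z) - exp z) / (a - 1) <= z * exp z.
Proof.
  intros Ha. assert (E : exp (a * z) = exp z * exp ((a - 1) * z)) by (rewrite <- exp_plus; f_equal; ring).
  pose proof (exp_ineq1_le ((a - 1) * z)). pose proof (exp_pos z).
  assert (exp z * (1 + (a - 1) * z) <= exp (a * z)) by (rewrite E; apply Rmult_le_compat_l; lra).
  apply Rmult_le_reg_r with (1 - a). lra.
  replace ((exp (a * z) - exp z) / (a - 1) * (1 - a)) with (exp z - exp (a * z)) by (field; lra).
  nra.
Qed.

Lemma S2 z b : 1 < b -> z * exp z <= (exp (b * z) - exp z) / (b - 1).
Proof.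
  intros Hb. assert (E : exp (b * z) = exp z * exp ((b - 1) * z)) by (rewrite <- exp_plus; f_equal; ring).
  pose proof (exp_ineq1_le ((b - 1) * z)). pose proof (exp_pos z).
  assert (exp z * (1 + (b - 1) * z) <= exp (b * z)) by (rewrite E; apply Rmult_le_compat_l; lra).
  apply Rmult_le_reg_r with (b - 1). lra.
  replace ((exp (b * z) - exp z) / (b - 1) * (b - 1)) with (exp (b * z) - exp z) by (field; lra).
  nra.
Qed.

Lemma S3 z a b : a < b -> b < 1 -> (exp (a * z) - exp z) / (a - 1) <= (exp (b * z) - exp z) / (b - 1).
Proof.
  intros Hab Hb. set (l := (1 - b) / (1 - a)).
  assert (Hl : 0 <= l <= 1).
  { unfold l. split. apply Rmult_le_pos; [lra|left; apply Rinv_0_lt_compat; lra].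
    apply Rmult_le_reg_r with (1 - a). lra. unfold Rdiv. rewrite Rmult_assoc, Rinv_l; lra. }
  pose proof (exp_convex l (a * z) z Hl) as H.
  replace (l * (a * z) + (1 - l) * z) with (b * z) in H by (unfold l; field; lra).
  replace ((exp (b * z) - exp z) / (b - 1)) with ((exp z - exp (b * z)) / (1 - b)) by (field; lra).
  replace ((exp (a * z) - exp z) / (a - 1)) with ((exp z - exp (a * z)) / (1 - a)) by (field; lra).
  assert (exp z - exp (b * z) >= l * (exp z - exp (a * z))) by lra.
  apply Rmult_le_reg_r with (1 - b). lra.
  replace ((exp z - exp (b * z)) / (1 - b) * (1 - b)) with (exp z - exp (b * z)) by (field; lra).
  replace ((exp z - exp (a * z)) / (1 - a) * (1 - b)) with (l * (exp z - exp (a * z))) by (unfold l; field; lra).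
  lra.
Qed.

Lemma S4 z a b : 1 < a -> a < b -> (exp (a * z) - exp z) / (a - 1) <= (exp (b * z) - exp z) / (b - 1).
Proof.
  intros Ha Hab. set (l := (a - 1) / (b - 1)).
  assert (Hl : 0 <= l <= 1).
  { unfold l. split. apply Rmult_le_pos; [lra|left; apply Rinv_0_lt_compat; lra].
    apply Rmult_le_reg_r with (b - 1). lra. unfold Rdiv. rewrite Rmult_assoc, Rinv_l; lra. }
  pose proof (exp_convex l (b * z) z Hl) as H.
  replace (l * (b * z) + (1 - l) * z) with (a * z) in H by (unfold l; field; lra).
  apply Rmult_le_reg_r with (a - 1). lra.
  replace ((exp (a * z) - exp z) / (a - 1) * (a - 1)) with (exp (a * z) - exp z) by (field; lra).
  replace ((exp (b * z) - exp z) / (b - 1) * (a - 1)) with (l * (exp (b * z) - exp z)) by (unfold l; field; lra).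
  lra.
Qed.

Lemma Gs_exp z a : Gs (exp z) a = if Req_EM_T a 1 then z * exp z else (exp (a * z) - exp z) / (a - 1).
Proof. unfold Gs, Rpower. rewrite ln_exp. destruct (Req_EM_T a 1). ring. reflexivity. Qed.

Lemma Gs_mono t a b : 0 < t -> a <= b -> Gs t a <= Gs t b.
Proof.
  intros Ht Hab. destruct (Req_dec a b) as [E|E]. subst; lra.
  assert (Hlt : a < b) by lra. clear Hab E.
  rewrite <- (exp_ln t Ht), !Gs_exp. set (z := ln t).
  destruct (Req_EM_T a 1) as [Ha|Ha]; destruct (Req_EM_T b 1) as [Hb|Hb].
  - lra.
  - subst. apply S2; lra.
  - subst. apply S1; lra.
  - destruct (Rlt_dec b 1).
    + apply S3; lra.
    + destruct (Rlt_dec a 1).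
      * eapply Rle_trans. apply S1; lra. apply S2; lra.
      * apply S4; lra.
Qed.

Lemma Phi_amono rho s a b : 1 < rho -> 1 <= s <= rho -> 0 < a -> a <= b ->
  a * Phi rho a s <= b * Phi rho b s.
Proof.
  intros Hr Hs Ha Hab. pose proof (p_range rho s Hr Hs) as Hp.
  assert (T1 : 0 < rho / s) by (apply Rdiv_lt_0_compat; lra).
  assert (T2 : 0 < 1 / s) by (apply Rdiv_lt_0_compat; lra).
  unfold Phi. set (p := (s - 1) / (rho - 1)) in *.
  pose proof (a_uu a _ ltac:(lra) T1). pose proof (a_uu a _ ltac:(lra) T2).
  pose proof (a_uu b _ ltac:(lra) T1). pose proof (a_uu b _ ltac:(lra) T2).
  pose proof (Gs_mono _ a b T1 Hab). pose proof (Gs_mono _ a b T2 Hab).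
  assert (E1 : a * (p * uu a (rho / s) + (1 - p) * uu a (1 / s)) = p * (a * uu a (rho / s)) + (1 - p) * (a * uu a (1 / s))) by ring.
  assert (E2 : b * (p * uu b (rho / s) + (1 - p) * uu b (1 / s)) = p * (b * uu b (rho / s)) + (1 - p) * (b * uu b (1 / s))) by ring.
  rewrite E1, E2. 
  assert (p * (a * uu a (rho / s)) <= p * (b * uu b (rho / s))) by (apply Rmult_le_compat_l; lra).
  assert ((1 - p) * (a * uu a (1 / s)) <= (1 - p) * (b * uu b (1 / s))) by (apply Rmult_le_compat_l; lra).
  lra.
Qed.

Lemma Dlt_amono rho a b : 1 < rho -> 0 < a -> a <= b -> a * Dlt a rho <= b * Dlt b rho.
Proof.
  intros Hr Ha Hab. destruct (proj2 (max_all a rho Hr)) as [s [Hs E]].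
  rewrite <- E. eapply Rle_trans. apply Phi_amono; eauto.
  apply Rmult_le_compat_l. lra. apply (proj1 (max_all b rho Hr)); auto.
Qed.

Lemma Dlt_bmono rho a b : 1 < rho -> a <= b -> b < 1 -> (1 - b) * Dlt b rho <= (1 - a) * Dlt a rho.
Proof.
  intros Hr Hab Hb. rewrite <- (Dlt_sym rho a), <- (Dlt_sym rho b) by auto.
  apply Dlt_amono; lra.
Qed.

Lemma Dlt_rmono a r1 r2 : 1 < r1 -> r1 <= r2 -> Dlt a r1 <= Dlt a r2.
Proof.
  intros H1 H12. assert (H2 : 1 < r2) by lra.
  destruct (proj2 (max_all a r1 H1)) as [s1 [Hs1 E]]. rewrite <- E.
  set (s2 := r2 * s1 / r1).
  assert (Hs2 : 1 <= s2 <= r2).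
  { unfold s2. split.
    - apply Rmult_le_reg_r with r1. lra. unfold Rdiv. rewrite Rmult_assoc, Rinv_l, Rmult_1_r by lra. nra.
    - apply Rmult_le_reg_r with r1. lra. unfold Rdiv. rewrite Rmult_assoc, Rinv_l, Rmult_1_r by lra. nra. }
  eapply Rle_trans; [| apply (proj1 (max_all a r2 H2) s2 Hs2)].
  unfold Phi.
  replace (r2 / s2) with (r1 / s1) by (unfold s2; field; lra).
  set (Hh := r1 / s1). set (v := 1 / s1). set (L := 1 / s2).
  assert (HL : 0 < L) by (unfold L; apply Rdiv_lt_0_compat; lra).
  assert (HLv : L <= v).
  { unfold L, v, s2. replace (1 / (r2 * s1 / r1)) with (r1 / r2 * (1 / s1)) by (field; lra).
    assert (r1 / r2 <= 1). { apply Rmult_le_reg_r with r2. lra. unfold Rdiv. rewrite Rmult_assoc, Rinv_l; lra. }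
    assert (0 < 1 / s1) by (apply Rdiv_lt_0_compat; lra). nra. }
  assert (HvH : v <= Hh).
  { unfold v, Hh. unfold Rdiv. apply Rmult_le_compat_r. left; apply Rinv_0_lt_compat; lra. lra. }
  assert (HLH : L < Hh).
  { unfold L, Hh, s2. replace (1 / (r2 * s1 / r1)) with (r1 / s1 / r2) by (field; lra).
    assert (0 < r1 / s1) by (apply Rdiv_lt_0_compat; lra).
    apply Rmult_lt_reg_r with r2. lra. unfold Rdiv at 1. rewrite Rmult_assoc, Rinv_l by lra. nra. }
  pose proof (uu_chord a L v Hh HL (conj HLv HvH) HLH) as C.
  pose proof (p_range r1 s1 H1 Hs1) as Hp.
  set (p1 := (s1 - 1) / (r1 - 1)) in *.
  assert (EQ : (s2 - 1) / (r2 - 1) * uu a Hh + (1 - (s2 - 1) / (r2 - 1)) * uu a L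
               - (p1 * uu a Hh + (1 - p1) * uu a v)
               = (1 - p1) / (Hh - L) * ((Hh - v) * uu a L + (v - L) * uu a Hh - (Hh - L) * uu a v)).
  { set (fH := uu a Hh). set (fL := uu a L). set (fv := uu a v). clearbody fH fL fv.
    unfold p1, Hh, v, L, s2. field. repeat split; try lra. nra. }
  assert (0 <= (1 - p1) / (Hh - L) * ((Hh - v) * uu a L + (v - L) * uu a Hh - (Hh - L) * uu a v)).
  { apply Rmult_le_pos. apply Rdiv_le_0_compat; lra. lra. }
  lra.
Qed.

Lemma Dlt_cont a rho : 1 < rho -> continuity_pt (fun r => Dlt a r) rho.
Proof.
  intros Hr. apply continuity_pt_filterlim. apply (ex_derive_continuous (V:=R_NormedModule)).
  pose proof (lnrho_pos rho Hr) as Hl.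
  assert (Hp : 0 < exp 1 * rho * ln rho * / (rho + - (1))).
  { repeat apply Rmult_lt_0_compat; try lra. apply exp_pos. apply Rinv_0_lt_compat; lra. }
  unfold Dlt. destruct (Req_EM_T a 0) as [H0|H0].
  - auto_derive. repeat split; try lra; auto.
  - destruct (Req_EM_T a 1) as [H1|H1].
    + auto_derive. repeat split; try lra; auto.
    + destruct (AB_pos a rho Hr H0 H1) as [HA HB]. unfold AA, BB, Rpower in *.
      unfold Rminus, Rdiv in HA, HB. auto_derive. repeat split; try lra; auto.
Qed.

Lemma uu_exd a t : 0 < t -> ex_derive (uu a) t.
Proof.
  intros Ht. unfold uu. destruct (Req_EM_T a 0). auto_derive; auto.
  destruct (Req_EM_T a 1). auto_derive; auto. unfold Rpower. auto_derive. repeat split; auto.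
Qed.

Lemma g_cont a : continuity_pt (fun r => uu a (1 / r) + uu a r) 1.
Proof.
  apply continuity_pt_filterlim.
  apply (ex_derive_continuous (K:=R_AbsRing) (V:=R_NormedModule) (fun r => uu a (1 / r) + uu a r) 1).
  apply (ex_derive_plus (K:=R_AbsRing) (V:=R_NormedModule) (fun r => uu a (1 / r)) (uu a)).
  - apply (ex_derive_comp (K:=R_AbsRing) (V:=R_NormedModule) (uu a) (fun r => 1 / r)).
    apply uu_exd. simpl. lra. auto_derive. lra.
  - apply uu_exd; lra.
Qed.

Lemma Dlt_bound a r : 1 < r -> 0 <= Dlt a r <= uu a (1 / r) + uu a r.
Proof.
  intros Hr. destruct (max_all a r Hr) as [M1 [s [Hs E]]].
  split.
  - pose proof (M1 1 ltac:(lra)) as H. unfold Phi in H.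
    replace (1 / 1) with 1 in H by field. rewrite uu_at1 in H.
    pose proof (uu_nonneg a (r / 1) ltac:(apply Rdiv_lt_0_compat; lra)).
    replace ((1 - 1) / (r - 1)) with 0 in H by (field; lra). lra.
  - rewrite <- E. unfold Phi. pose proof (p_range r s Hr Hs) as Hp.
    set (p := (s - 1) / (r - 1)) in *.
    assert (Hir : 0 < 1 / r) by (apply Rdiv_lt_0_compat; lra).
    assert (Hir1 : 1 / r < r).
    { apply Rmult_lt_reg_r with r. lra. unfold Rdiv. rewrite Rmult_1_l, Rinv_l by lra. nra. }
    assert (Hir2 : 1 / r <= 1).
    { apply Rmult_le_reg_r with r. lra. unfold Rdiv. rewrite Rmult_1_l, Rinv_l by lra. nra. }
    pose proof (uu_nonneg a (1 / r) Hir). pose proof (uu_nonneg a r ltac:(lra)).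
    assert (B : forall v, 1 / r <= v <= r -> uu a v <= uu a (1 / r) + uu a r).
    { intros v Hv. pose proof (uu_chord a (1 / r) v r Hir Hv Hir1) as C.
      assert ((r - v) * uu a (1 / r) <= (r - 1 / r) * uu a (1 / r)) by (apply Rmult_le_compat_r; lra).
      assert ((v - 1 / r) * uu a r <= (r - 1 / r) * uu a r) by (apply Rmult_le_compat_r; lra).
      assert ((r - 1 / r) * uu a v <= (r - 1 / r) * (uu a (1 / r) + uu a r)) by lra.
      apply Rmult_le_reg_l with (r - 1 / r). lra. assumption. }
    assert (V1 : 1 / r <= r / s <= r).
    { split.
      - assert (1 <= r / s). { apply Rmult_le_reg_r with s. lra. unfold Rdiv. rewrite Rmult_assoc, Rinv_l; lra. } lra.
      - apply Rmult_le_reg_r with s. lra. unfold Rdiv. rewrite Rmult_assoc, Rinv_l; nra. }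
    assert (V2 : 1 / r <= 1 / s <= r).
    { split.
      - unfold Rdiv. rewrite !Rmult_1_l. apply Rinv_le_contravar; lra.
      - assert (1 / s <= 1). { apply Rmult_le_reg_r with s. lra. unfold Rdiv. rewrite Rmult_assoc, Rinv_l; lra. } lra. }
    pose proof (B _ V1). pose proof (B _ V2).
    assert (p * uu a (r / s) <= p * (uu a (1 / r) + uu a r)) by (apply Rmult_le_compat_l; lra).
    assert ((1 - p) * uu a (1 / s) <= (1 - p) * (uu a (1 / r) + uu a r)) by (apply Rmult_le_compat_l; lra).
    lra.
Qed.

Lemma Dlt_lim a : limit1_in (fun r => Dlt a r) (fun r => 1 < r) 0 1.
Proof.
  intros eps Heps. pose proof (g_cont a) as G. unfold continuity_pt, continue_in, limit1_in, limit_in in G.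
  destruct (G eps Heps) as [alp [Ha Hg]]. exists alp. split; auto.
  intros x [Hx Hd]. pose proof (Hg x (conj (conj I (Rlt_not_eq _ _ Hx)) Hd)) as K.
  simpl in *. unfold R_dist in *.
  replace (1 / 1) with 1 in K by field. rewrite uu_at1, Rplus_0_r in K.
  pose proof (Dlt_bound a x Hx). rewrite Rminus_0_r in K. rewrite Rminus_0_r.
  rewrite Rabs_right in * by lra. lra.
Qed.

Theorem theorem9 :
  (* (a) *)
  (forall rho, 1 < rho ->
     convex_on_R (fun a => Dlt a rho)
     /\ (forall a, Dlt (1 + a) rho = Dlt (- a) rho)
     /\ (forall a, Dlt (1 / 2) rho <= Dlt a rho))
  /\
  (* (b) *)
  (forall rho, 1 < rho ->
     (forall a b, 0 < a -> a <= b -> a * Dlt a rho <= b * Dlt b rho)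
     /\ (forall a b, a <= b -> b < 1 ->
           (1 - b) * Dlt b rho <= (1 - a) * Dlt a rho))
  /\
  (* (c) *)
  (forall a,
     (forall r1 r2, 1 < r1 -> r1 <= r2 -> Dlt a r1 <= Dlt a r2)
     /\ (forall rho, 1 < rho -> continuity_pt (fun r => Dlt a r) rho)
     /\ limit1_in (fun r => Dlt a r) (fun r => 1 < r) 0 1).
Proof.
  split; [|split].
  - intros rho Hr. split; [|split].
    + apply Dlt_convex; auto.
    + intros a. replace (1 + a) with (1 - - a) by ring. apply Dlt_sym; auto.
    + intros a. apply Dlt_min; auto.
  - intros rho Hr. split.
    + intros a b Ha Hab. apply Dlt_amono; auto.
    + intros a b Hab Hb. apply Dlt_bmono; auto.
  - intros a. split; [|split].
    + intros r1 r2 H1 H2. apply Dlt_rmono; auto.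
    + intros rho Hr. apply Dlt_cont; auto.
    + apply Dlt_lim.
Qed.
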